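(* Let $\rho$ be a representation of $32_{65}$ over a set $U$, and view it as an edge-coloring of the complete graph on $U$ in which the edge $\{x,y\}$ ($x\ne y$) gets the color $z\in\{a,b,c\}$ with $(x,y)\in\rho(z)$. Then for every edge $x_0x_1$ of color $a$ there is a set of four vertices, disjoint from $\{x_0,x_1\}$, all six of whose edges have color $a$. More precisely, there exist ten distinct vertices $x_0,x_1$, $w_{pq}$ for $(p,q)\in\{b,c\}^2$, $u_p$ and $v_p$ for $p\in\{b,c\}$ such that: $x_0w_{pq}$ has color $p$ and $w_{pq}x_1$ has color $q$; $x_0u_p$ has color $a$ and $u_px_1$ has color $p$; $x_0v_p$ has color $p$ and $v_px_1$ has color $a$; all edges among the four vertices $w_{pq}$ have color $a$; and every edge between a vertex $w_{pq}$ and a vertex $u_{p'}$ or $v_{p'}$ has color $a$.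
   Context: $32_{65}$ is the finite integral symmetric relation algebra with atoms $1'$, $a$, $b$, $c$, all symmetric, in which a diversity cycle $xyz$ (with $x,y,z\in\{a,b,c\}$) is mandatory (i.e. $x;y\ge z$) if it involves $a$ and forbidden (i.e. $x;y\cdot z=0$) otherwise. A representation over a set $U$ is an embedding $\rho$ into the full relation algebra $\langle\mathcal P(U\times U),\cup,{}^c,\circ,{}^{-1},\mathrm{Id}_U\rangle$. *)

(* Defs.v *)
From HB Require Import structures.
From mathcomp Require Import all_boot.
From Stdlib Require Import List.
Set Implicit Arguments. Unset Strict Implicit. Unset Printing Implicit Defensive.

(** Atoms of 32_65: the identity 1' (written [e]) and the diversity atoms a, b, c. *)
Inductive atom := e | a | b | c.

Definition atom_to_ord (x : atom) : 'I_4 :=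
  match x with e => inord 0 | a => inord 1 | b => inord 2 | c => inord 3 end.
Definition ord_to_atom (i : 'I_4) : option atom :=
  match val i with 0 => Some e | 1 => Some a | 2 => Some b | 3 => Some c | _ => None end.
Lemma atom_ordK : pcancel atom_to_ord ord_to_atom.
Proof. by case; rewrite /ord_to_atom /= inordK. Qed.
HB.instance Definition _ := Finite.copy atom (pcan_type atom_ordK).

(** Allowed (non-forbidden) cycles:  z <= x ; y  in 32_65. *)
Definition allowed (x y z : atom) : bool :=
  if x == e then y == z else
  if y == e then x == z else
  if z == e then x == y else
  [|| x == a, y == a | z == a].

Definition RA := {set atom}.
Definition ra_comp (X Y : RA) : RA :=
  [set z | [exists x in X, exists y in Y, allowed x y z]].
Definition ra_conv (X : RA) : RA := X.   (* all atoms symmetric *)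
Definition ra_id : RA := [set e].

Definition rel_eq {U : Type} (R S : U -> U -> Prop) := forall x y, R x y <-> S x y.

Definition representation {U : Type} (rho : RA -> U -> U -> Prop) : Prop :=
  (forall X Y, rel_eq (rho (X :|: Y)) (fun x y => rho X x y \/ rho Y x y)) /\
  (forall X, rel_eq (rho (~: X)) (fun x y => ~ rho X x y)) /\
  (forall X Y, rel_eq (rho (ra_comp X Y))
                      (fun x z => exists y, rho X x y /\ rho Y y z)) /\
  (forall X, rel_eq (rho (ra_conv X)) (fun x y => rho X y x)) /\
  rel_eq (rho ra_id) (fun x y => x = y) /\
  (forall X Y, rel_eq (rho X) (rho Y) -> X = Y).

Definition colour {U : Type} (rho : RA -> U -> U -> Prop) (z : atom) (x y : U) : Prop :=
  rho [set z] x y.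

(* Main.v *)
Require Import Defs.
From HB Require Import structures.
From mathcomp Require Import all_boot.
From Stdlib Require Import List Classical.
Import ListNotations.

Definition abeq (x y : atom) : bool :=
  match x, y with e, e | a, a | b, b | c, c => true | _, _ => false end.
Lemma aeqE (x y : atom) : (x == y) = abeq x y.
Proof. by apply/eqP/idP => [->|]; [case: y | case: x; case: y]. Qed.

Section R.
Set Implicit Arguments.
Variable U : Type.
Variable rho : RA -> U -> U -> Prop.
Hypothesis hr : representation rho.

Lemma mono (X Y : RA) x y : X \subset Y -> rho X x y -> rho Y x y.
Proof.
case: hr => hU _ sub H.
have -> : Y = X :|: Y by apply/esym/setUidPr.
by apply (hU X Y x y).2; left.
Qed.

Lemma colE x y : colour rho e x y <-> x = y.
Proof. by case: hr => _ [_ [_ [_ [hI _]]]]; apply: hI. Qed.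

Lemma colS z x y : colour rho z x y -> colour rho z y x.
Proof. by case: hr => _ [_ [_ [hV _]]]; apply: (hV _ x y).1. Qed.

Lemma colD p q x y : colour rho p x y -> colour rho q x y -> p = q.
Proof.
case: hr => _ [hC _] Hp Hq; case: (eqVneq p q) => // npq.
have : rho (~: [set q]) x y.
  apply: (@mono [set p] _ x y _ Hp); apply/subsetP => z; rewrite !inE => /eqP ->; done.
by move/(hC _ x y).
Qed.

Lemma colX x y : exists z, colour rho z x y.
Proof.
case: hr => hU [hC _].
have H : rho ([set e] :|: ~: [set e]) x y.
  apply (hU _ _ x y).2; case: (classic (rho [set e] x y)) => H; [left|right] => //.
  by apply (hC _ x y).2.
have E : [set e] :|: ~: [set e] = [set e] :|: ([set a] :|: ([set b] :|: [set c])).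
  by apply/setP => z; rewrite !inE; case: z; rewrite ?aeqE.
rewrite E in H.
case/(hU _ _ x y): H => H; first by exists e.
case/(hU _ _ x y): H => H; first by exists a.
case/(hU _ _ x y): H => H; first by exists b.
by exists c.
Qed.

Lemma comp1 p q z : (z \in ra_comp [set p] [set q]) = allowed p q z.
Proof.
rewrite inE; apply/existsP/idP.
  by case=> x /andP[/set1P -> /existsP[y /andP[/set1P -> H]]].
move=> H; exists p; rewrite set11 /=; apply/existsP; exists q; by rewrite set11.
Qed.

Lemma colC p q z x y : colour rho z x y -> allowed p q z ->
  exists m, colour rho p x m /\ colour rho q m y.
Proof.
case: hr => _ [_ [hM _]] Hz Ha.
have : rho (ra_comp [set p] [set q]) x y.
  apply: (@mono [set z] _ x y _ Hz); apply/subsetP => w /set1P ->; by rewrite comp1.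
by move/(hM _ _ x y).
Qed.

Lemma colT p q z x m y : colour rho p x m -> colour rho q m y -> colour rho z x y ->
  allowed p q z.
Proof.
case: hr => _ [hC [hM _]] Hp Hq Hz.
case E: (allowed p q z) => //.
have : rho (~: ra_comp [set p] [set q]) x y.
  apply: (@mono [set z] _ x y _ Hz); apply/subsetP => w /set1P ->; by rewrite inE comp1 E.
move/(hC _ x y); case; apply (hM _ _ x y).2; by exists m.
Qed.

Lemma adj p q x w w' : colour rho p x w -> colour rho q x w' ->
  p \in [:: b; c] -> q \in [:: b; c] -> w <> w' -> colour rho a w w'.
Proof.
move=> Hp Hq hp hq nw.
case: (colX w w') => z Hz.
have := colT (colS Hp) Hq Hz.
move: hp hq Hz; clear Hp Hq; rewrite /allowed !inE; case: p; case: q; case: z; rewrite ?aeqE //= => _ _ /colE; try done.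
Qed.

Lemma neq p q x y y' : colour rho p x y -> colour rho q x y' -> p != q -> y <> y'.
Proof. move=> Hp Hq npq E; subst; by rewrite (colD Hp Hq) eqxx in npq. Qed.


Lemma In_F2 (T S : Type) (R : T -> S -> Prop) l s x :
  Forall2 R l s -> In x l -> exists t, In t s /\ R x t.
Proof.
elim=> [//|y t l' s' Hy _ IH] /= [<-|H].
  by exists t; split => //; left.
by case: (IH H) => t' [H1 H2]; exists t'; split => //; right.
Qed.

Arguments In_F2 {T S R l s x}.

Lemma nodup_sig (T S : Type) (R : T -> S -> Prop) l s :
  (forall y s1 s2, R y s1 -> R y s2 -> s1 = s2) ->
  Forall2 R l s -> NoDup s -> NoDup l.
Proof.
move=> fn; elim=> [|y t l' s' Hy HF IH] Hs; first by constructor.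
inversion Hs as [|t0 s0 Hn Hd]; subst; constructor; last by apply IH.
move=> Hin; case: (In_F2 HF Hin) => t' [K1 K2].
by rewrite (fn _ _ _ Hy K2) in Hn.
Qed.

End R.
Arguments colC {U rho} hr {p q z x y}.
Arguments colS {U rho} hr {z x y}.
Arguments colE {U rho} hr {x y}.
Arguments colD {U rho} hr {p q x y}.
Arguments adj {U rho} hr {p q x w w'}.
Arguments neq {U rho} hr {p q x y y'}.

Theorem mainTheorem6 (U : Type) (rho : RA -> U -> U -> Prop) :
  representation rho ->
  forall x0 x1 : U, colour rho a x0 x1 ->
  exists (wbb wbc wcb wcc ub uc vb vc : U),
    NoDup [x0; x1; wbb; wbc; wcb; wcc; ub; uc; vb; vc] /\
    (* x0 w_pq has colour p, w_pq x1 has colour q *)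
    colour rho b x0 wbb /\ colour rho b wbb x1 /\
    colour rho b x0 wbc /\ colour rho c wbc x1 /\
    colour rho c x0 wcb /\ colour rho b wcb x1 /\
    colour rho c x0 wcc /\ colour rho c wcc x1 /\
    (* x0 u_p has colour a, u_p x1 has colour p *)
    colour rho a x0 ub /\ colour rho b ub x1 /\
    colour rho a x0 uc /\ colour rho c uc x1 /\
    (* x0 v_p has colour p, v_p x1 has colour a *)
    colour rho b x0 vb /\ colour rho a vb x1 /\
    colour rho c x0 vc /\ colour rho a vc x1 /\
    (* all edges among the w_pq have colour a *)
    (forall w w', In w [wbb; wbc; wcb; wcc] -> In w' [wbb; wbc; wcb; wcc] ->
       w <> w' -> colour rho a w w') /\
    (* every edge between a w_pq and a u_p' or v_p' has colour a *)
    (forall w t, In w [wbb; wbc; wcb; wcc] -> In t [ub; uc; vb; vc] ->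
       colour rho a w t).
Proof.
move=> hr x0 x1 H01.
have [wbb [B1 B2]] := colC hr (p:=b) (q:=b) H01 ltac:(by rewrite /allowed ?aeqE).
have [wbc [C1 C2]] := colC hr (p:=b) (q:=c) H01 ltac:(by rewrite /allowed ?aeqE).
have [wcb [D1 D2]] := colC hr (p:=c) (q:=b) H01 ltac:(by rewrite /allowed ?aeqE).
have [wcc [E1 E2]] := colC hr (p:=c) (q:=c) H01 ltac:(by rewrite /allowed ?aeqE).
have [ub [F1 F2]] := colC hr (p:=a) (q:=b) H01 ltac:(by rewrite /allowed ?aeqE).
have [uc [G1 G2]] := colC hr (p:=a) (q:=c) H01 ltac:(by rewrite /allowed ?aeqE).
have [vb [I1 I2]] := colC hr (p:=b) (q:=a) H01 ltac:(by rewrite /allowed ?aeqE).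
have [vc [J1 J2]] := colC hr (p:=c) (q:=a) H01 ltac:(by rewrite /allowed ?aeqE).
exists wbb, wbc, wcb, wcc, ub, uc, vb, vc.
have B2' := colS hr B2. have C2' := colS hr C2. have D2' := colS hr D2.
have E2' := colS hr E2. have F2' := colS hr F2. have G2' := colS hr G2.
have I2' := colS hr I2. have J2' := colS hr J2. have H10 := colS hr H01.
have K0 : colour rho e x0 x0 by apply/(colE hr).
have K1 : colour rho e x1 x1 by apply/(colE hr).
split.
  apply: (nodup_sig (R := fun y s => colour rho s.1 x0 y /\ colour rho s.2 x1 y)
    (s := [(e,a); (a,e); (b,b); (b,c); (c,b); (c,c); (a,b); (a,c); (b,a); (c,a)])).
  - move=> y [s1 s2] [t1 t2] /= [P1 P2] [Q1 Q2].
    by rewrite (colD hr P1 Q1) (colD hr P2 Q2).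
  - repeat (apply Forall2_cons; [split; eassumption|]); apply Forall2_nil.
  - repeat (constructor; [simpl; intuition discriminate|]); constructor.
do 16 (split; first by []).
split.
  move=> w w' /= Hw Hw'.
  case: Hw => [<-|[<-|[<-|[<-|[]]]]]; case: Hw' => [<-|[<-|[<-|[<-|[]]]]] nw;
  try (eapply (adj hr (x:=x0)); [eassumption|eassumption|by rewrite !inE ?aeqE|by rewrite !inE ?aeqE|]); congruence.
move=> w t /= Hw Ht.
case: Hw => [<-|[<-|[<-|[<-|[]]]]]; case: Ht => [<-|[<-|[<-|[<-|[]]]]];
  first [ eapply (adj hr (x:=x0)); [eassumption|eassumption|by rewrite !inE ?aeqE|by rewrite !inE ?aeqE|]
        | eapply (adj hr (x:=x1)); [eassumption|eassumption|by rewrite !inE ?aeqE|by rewrite !inE ?aeqE|] ];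
  first [ (eapply (neq hr (x:=x0)); [eassumption|eassumption|by rewrite aeqE])
        | (eapply (neq hr (x:=x1)); [eassumption|eassumption|by rewrite aeqE]) ].
Qed.
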